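(* Let $h\ge 2$ and $k\ge 1$ be integers. Let $B'$ be a collection of $kh$ colored balls with exactly $h$ balls of color $i$ for each color $i\in[k]$. Let $C'\subseteq B'$ be obtained by keeping each ball independently with probability $\alpha\in[0,\frac{1}{2h}]$. Then the probability that all balls in $C'$ have distinct colors is at most $\exp(-kh(h-1)\alpha^2/4)$. *)

(* Defs.v *)
From HB Require Import structures.
From mathcomp Require Import all_boot all_order all_algebra.
From mathcomp Require Import reals.
From mathcomp Require Import sequences exp.
Set Implicit Arguments. Unset Strict Implicit. Unset Printing Implicit Defensive.
Import Order.TTheory GRing.Theory Num.Theory.
Local Open Scope ring_scope.

(* The ball collection B' is modelled as 'I_k * 'I_h : ball (i, j) is the
   j-th ball of color i, so there are exactly h balls of each color i in [k]. *)
Definition balls (k h : nat) := ('I_k * 'I_h)%type.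

(* Probability that the random subset C' (each ball kept independently with
   probability a) equals the given subset S. *)
Definition keep_prob {R : realType} {T : finType} (a : R) (S : {set T}) : R :=
  a ^+ #|S| * (1 - a) ^+ (#|T| - #|S|).

Definition distinct_colors (k h : nat) (C : {set balls k h}) : bool :=
  [forall x in C, forall y in C, (x.1 == y.1) ==> (x == y)].

Definition prob_distinct {R : realType} (k h : nat) (a : R) : R :=
  \sum_(C : {set balls k h} | distinct_colors C) keep_prob a C.

(* Main.v *)
Require Import Defs.
From HB Require Import structures.
From mathcomp Require Import all_boot all_order all_algebra.
From mathcomp Require Import reals.
From mathcomp Require Import sequences exp.
From mathcomp Require Import ring lra.
Import Order.TTheory GRing.Theory Num.Theory.
Local Open Scope ring_scope.

Lemma bern (R : realType) (a : R) n : 0 <= a <= 1 -> 1 - n%:R * a <= (1 - a) ^+ n.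
Proof.
move=> /andP[a0 a1]; elim: n => [|n IH]; first by rewrite mul0r subr0 expr0.
rewrite exprSr.
have h1 : (1 - n%:R * a) * (1 - a) <= (1 - a) ^+ n * (1 - a).
  by apply: ler_wpM2r => //; lra.
have n0 : 0 <= n%:R :> R by [].
rewrite -natr1; nra.
Qed.

Lemma gbound (R : realType) (a : R) n : 0 <= a -> n%:R * a <= 1/2 ->
  (1 - a) ^+ n * (1 + n%:R * a) <= 1 - n%:R * (n%:R + 1) * a ^+ 2 / 4.
Proof.
move=> a0; elim: n => [|n IH]; first by rewrite !mul0r expr0; lra.
rewrite -natr1 => H.
have n0 : 0 <= n%:R :> R by [].
have Hn : n%:R * a <= 1/2 by nra.
have a1 : a <= 1 by nra.
have := IH Hn; have := @bern R a n (introT andP (conj a0 a1)).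
rewrite exprSr; set t := (1 - a) ^+ n => hb ih.
rewrite exprSr -/t.
have t2 : 1/2 <= t by lra.
have : 0 <= (n%:R + 1) * a ^+ 2 * (t - 1/2).
  by apply: mulr_ge0; [nra| lra].
rewrite expr2 expr1 in ih *. move=> hh. nra.
Qed.

Lemma prod_if (R : realType) (T : finType) (S : {set T}) (x y : R) :
  \prod_(t : T) (if t \in S then x else y) = x ^+ #|S| * y ^+ (#|T| - #|S|).
Proof.
rewrite (bigID (fun t => t \in S)) /=.
rewrite (eq_bigr (fun _ => x)) => [|t ->//].
rewrite [X in _ * X](eq_bigr (fun _ => y)) => [|t /negbTE ->//].
rewrite !prodr_const; congr (_ * _ ^+ _).
by rewrite -(cardC (mem S)) addKn.
Qed.

Lemma keep_prod (R : realType) k h (a : R) (C : {set balls k h}) :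
  keep_prob a C = \prod_(x : balls k h) (if x \in C then a else 1 - a).
Proof. by rewrite prod_if. Qed.

Definition Fc {R : realType} {h} (a : R) (S : {set 'I_h}) : R :=
  if (#|S| <= 1)%N then a ^+ #|S| * (1 - a) ^+ (h - #|S|) else 0.

Lemma prob_prod (R : realType) k h (a : R) :
  prob_distinct k h a = (\sum_(S : {set 'I_h}) Fc a S) ^+ k.
Proof.
pose phi (f : {ffun 'I_k -> {set 'I_h}}) := [set x : balls k h | x.2 \in f x.1].
pose psi (C : {set balls k h}) := [ffun i : 'I_k => [set j | (i, j) \in C]].
have phiK : cancel phi psi.
  by move=> f; apply/ffunP => i; apply/setP => j; rewrite ffunE !inE.
have psiK : cancel psi phi.
  by move=> C; apply/setP => -[i j]; rewrite !inE ffunE inE.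
rewrite /prob_distinct big_mkcond /=.
rewrite (reindex phi) /=; last by apply: onW_bij; exists psi.
have -> : (\sum_(S : {set 'I_h}) Fc a S) ^+ k =
   \prod_(i < k) \sum_(S : {set 'I_h}) Fc a S by rewrite prodr_const card_ord.
rewrite bigA_distr_bigA; apply: eq_bigr => f _.
case: (boolP [forall i, #|f i| <= 1]%N) => H.
- have -> : distinct_colors (phi f).
    apply/forallP => x; apply/implyP => xC; apply/forallP => y; apply/implyP => yC.
    apply/implyP => /eqP e.
    move: x y xC yC e => [x1 x2] [y1 y2]; rewrite !inE /= => xC yC e.
    subst y1.
    have := forallP H x1 => /card_le1_eqP hc.
    by rewrite (hc _ _ xC yC).
  rewrite keep_prod.
  have -> : \prod_(x : balls k h) (if x \in phi f then a else 1 - a) =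
     \prod_(i < k) \prod_(j < h) (if (i, j) \in phi f then a else 1 - a).
    by rewrite pair_big; apply: eq_big => // -[i j].
  apply: eq_bigr => i _.
  rewrite (eq_bigr (fun j => if j \in f i then a else 1 - a)); last first.
    by move=> j _; rewrite inE.
  by rewrite prod_if card_ord /Fc (forallP H i).
- move: H; rewrite negb_forall => /existsP [i Hi].
  have -> : distinct_colors (phi f) = false.
    apply/negbTE; apply: contra Hi => dc.
    apply/card_le1_eqP => j1 j2 h1 h2.
    have : (i, j1) \in phi f by rewrite inE.
    have : (i, j2) \in phi f by rewrite inE.
    move=> m2 m1.
    have := forallP dc (i, j1); rewrite m1 /= => /forallP /(_ (i, j2)).
    by rewrite m2 eqxx /= => /eqP [].
  by rewrite (bigD1 i) //= /Fc (negbTE Hi) mul0r.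
Qed.

Lemma sumFc (R : realType) h (a : R) (hh : (1 <= h)%N) :
  \sum_(S : {set 'I_h}) Fc a S = (1 - a) ^+ h + h%:R * (a * (1 - a) ^+ (h - 1)).
Proof.
rewrite (bigD1 set0) //= /Fc cards0 /= expr0 mul1r subn0; congr (_ + _).
have E : #|[set A : {set 'I_h} | #|A| == 1%N]| = h by rewrite card_draws card_ord bin1.
rewrite mulr_natl -[X in _ = _ *+ X]E -sumr_const.
rewrite big_mkcond [RHS]big_mkcond /=; apply: eq_bigr => S _.
rewrite inE; case E1: #|S| => [|[|n]] /=.
- by move/eqP: E1; rewrite cards_eq0 => /eqP ->; rewrite eqxx.
- have -> : S != set0 by rewrite -cards_eq0 E1.
  by rewrite expr1.
- by case: (S != set0).
Qed.

Theorem lemma3p7 (R : realType) (h k : nat) (a : R)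
  (hh : (2 <= h)%N) (hk : (1 <= k)%N)
  (ha0 : 0 <= a) (ha1 : a <= ((2 * h)%:R)^-1) :
  prob_distinct k h a <=
  expR (- ((k * h * (h - 1))%:R * a ^+ 2 / 4)).
Proof.
rewrite prob_prod sumFc; last exact: ltnW.
case: h hh ha1 => [|m] // _ ha1.
rewrite subSS subn0.
have hc : 0 < (2 * m.+1)%:R :> R by rewrite ltr0n muln_gt0.
have H1 : a * (2 * m.+1)%:R <= 1.
  have := ler_wpM2r (ltW hc) ha1; rewrite mulVf //; exact: lt0r_neq0.
move: H1; rewrite natrM -natr1 => H1.
have m0 : 0 <= m%:R :> R by [].
have Hm : m%:R * a <= 1/2 by nra.
have := @gbound R a m ha0 Hm.
have -> : (1 - a) ^+ m.+1 + m.+1%:R * (a * (1 - a) ^+ m) =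
          (1 - a) ^+ m * (1 + m%:R * a) by rewrite exprSr -natr1; ring.
set y := m%:R * (m%:R + 1) * a ^+ 2 / 4 => hg.
have p0 : 0 <= (1 - a) ^+ m * (1 + m%:R * a).
  by apply: mulr_ge0; [apply: exprn_ge0; nra | nra].
apply: (le_trans (lerXn2r k _ _ hg)); rewrite ?nnegrE //; first by apply: (le_trans p0).
apply: (le_trans (lerXn2r k _ _ (expR_ge1Dx (- y)))); rewrite ?nnegrE //.
- by apply: (le_trans p0 hg).
- exact: expR_ge0.
rewrite -expRM_natl.
have -> : k%:R * - y = - ((k * m.+1 * m)%:R * a ^+ 2 / 4).
  by rewrite /y !natrM -natr1; ring.
by [].
Qed.
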